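(* Let $F=(f_t)_{t\in\mathbb{R}}$ be a continuous flow on a compact metric space $X$, and suppose the $F$-invariant Borel probability measure $\mu$ is almost expansive at scale $\varepsilon$. Let $\gamma\in(0,\varepsilon/2]$, and for each $t>0$ let $\mathcal{A}_t$ be an adapted partition for a $(t,\gamma)$-separated set of maximal cardinality. Let $Q\subset X$ be a measurable $F$-invariant set. Then for every $\alpha>0$ there exists $t_0$ such that for every $t\ge t_0$ there is a subcollection $U\subset\mathcal{A}_t$ with $\mu(U\triangle Q)<\alpha$ (where $U$ also denotes the union of its elements).
   Context: $d_t(x,y)=\sup_{s\in[0,t]}d(f_sx,f_sy)$, $B_t(x,r)=\{y:d_t(x,y)<r\}$, $\overline B_t(x,r)=\{y:d_t(x,y)\le r\}$; $E$ is $(t,\gamma)$-separated if $d_t(x,y)>\gamma$ for distinct $x,y\in E$. If $E_t$ is a $(t,\gamma)$-separated set of maximal cardinality, a partition $\mathcal{A}_t$ of $X$ is adapted to $E_t$ if for every $w\in\mathcal{A}_t$ there is $x\in E_t$ with $B_t(x,\gamma/2)\subset w\subset\overline B_t(x,\gamma)$. $\Gamma_\varepsilon(x)=\{y:d(f_sx,f_sy)\le\varepsilon\ \forall s\in\mathbb{R}\}$, $\mathrm{NE}(\varepsilon)=\{x:\Gamma_\varepsilon(x)\not\subset\{f_sx:s\in\mathbb{R}\}\}$; $\mu$ is almost expansive at scale $\varepsilon$ if $\mu(\mathrm{NE}(\varepsilon))=0$. *)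

(* Defs.v *)
From HB Require Import structures.
From mathcomp Require Import all_boot all_order all_algebra.
From mathcomp Require Import all_classical all_reals all_analysis.
Set Implicit Arguments. Unset Strict Implicit. Unset Printing Implicit Defensive.
Import Order.TTheory GRing.Theory Num.Theory.
Local Open Scope classical_set_scope.
Local Open Scope ring_scope.

Section Defs.
Context {R : realType} {X : Type}.
Variable (dist : X -> X -> R).

Definition is_metric : Prop :=
  [/\ forall x y, 0 <= dist x y,
      forall x y, dist x y = 0 <-> x = y,
      forall x y, dist x y = dist y x &
      forall x y z, dist x z <= dist x y + dist y z].

Definition dopen (U : set X) : Prop :=
  forall x, U x -> exists2 r : R, 0 < r & [set y | dist x y < r] `<=` U.

Definition dcompact : Prop :=
  forall (I : Type) (U : I -> set X), (forall i, dopen (U i)) ->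
    setT `<=` \bigcup_(i in setT) U i ->
    exists2 J : set I, finite_set J & setT `<=` \bigcup_(i in J) U i.

Definition is_continuous_flow (f : R -> X -> X) : Prop :=
  [/\ forall x, f 0 x = x,
      forall s t x, f (s + t) x = f s (f t x) &
      forall t x (e : R), 0 < e -> exists2 del : R, 0 < del &
        forall s y, `|s - t| < del -> dist x y < del -> dist (f t x) (f s y) < e].

Definition bowen_dist (f : R -> X -> X) (t : R) (x y : X) : R :=
  sup [set dist (f s x) (f s y) | s in `[0, t]].

Definition bowen_ball (f : R -> X -> X) (t : R) (x : X) (r : R) : set X :=
  [set y | bowen_dist f t x y < r].

Definition bowen_cball (f : R -> X -> X) (t : R) (x : X) (r : R) : set X :=
  [set y | bowen_dist f t x y <= r].

Definition separated (f : R -> X -> X) (t gamma : R) (E : set X) : Prop :=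
  forall x y, E x -> E y -> x <> y -> gamma < bowen_dist f t x y.

Definition max_separated (f : R -> X -> X) (t gamma : R) (E : set X) : Prop :=
  separated f t gamma E /\
  forall E' : set X, separated f t gamma E' -> (E' #<= E)%card.

Definition is_partition (P : set (set X)) : Prop :=
  [/\ forall w, P w -> w !=set0,
      forall w w', P w -> P w' -> w `&` w' !=set0 -> w = w' &
      \bigcup_(w in P) w = setT].

Definition adapted (f : R -> X -> X) (t gamma : R) (E : set X) (P : set (set X)) : Prop :=
  is_partition P /\
  forall w, P w -> exists2 x, E x &
    bowen_ball f t x (gamma / 2) `<=` w /\ w `<=` bowen_cball f t x gamma.

Definition Gamma_set (f : R -> X -> X) (eps : R) (x : X) : set X :=
  [set y | forall s : R, dist (f s x) (f s y) <= eps].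

Definition orbit_set (f : R -> X -> X) (x : X) : set X :=
  [set f s x | s in [set: R]].

Definition NE (f : R -> X -> X) (eps : R) : set X :=
  [set x | ~ (Gamma_set f eps x `<=` orbit_set f x)].

End Defs.

(* Main.v *)
Require Import Defs.
From HB Require Import structures.
From mathcomp Require Import all_boot all_order all_algebra.
From mathcomp Require Import all_classical all_reals all_analysis.
From mathcomp Require Import ring lra.
Import Order.TTheory GRing.Theory Num.Theory.
Local Open Scope classical_set_scope.
Local Open Scope ring_scope.
Section Metric.
Context {R : realType} {X : choiceType} (dist : X -> X -> R).
Hypothesis Hmetric : is_metric dist.
Hypothesis Hcompact : dcompact dist.

Definition dclosed (C : set X) := dopen dist (~` C).
Definition dball (x : X) (r : R) := [set y | dist x y < r].

Lemma dist_ge0 x y : 0 <= dist x y.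
Proof. by case: Hmetric. Qed.
Lemma distxx x : dist x x = 0.
Proof. by case: Hmetric => _ h _ _; apply/h. Qed.
Lemma distC x y : dist x y = dist y x.
Proof. by case: Hmetric. Qed.
Lemma dist_tri x y z : dist x z <= dist x y + dist y z.
Proof. by case: Hmetric. Qed.

Lemma dball_open x r : dopen dist (dball x r).
Proof.
move=> y /= hy; exists (r - dist x y); first by rewrite subr_gt0.
move=> z /= hz; apply: (le_lt_trans (dist_tri x y z)).
by rewrite -ltrBrDl.
Qed.

Lemma finite_nat_bound (I : choiceType) (J : set I) (g : I -> nat) :
  finite_set J -> exists N, forall i, J i -> (g i <= N)%N.
Proof.
move=> fJ; exists (\max_(i <- (finmap.enum_fset (fset_set J))) g i) => i Ji.
apply: (@leq_bigmax_seq _ _ xpredT g i) => //.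
by rewrite in_fset_set // inE.
Qed.

Lemma dist_bounded (x0 : X) : exists B : R, forall x y, dist x y <= B.
Proof.
have cov : setT `<=` \bigcup_(n in [set: nat]) dball x0 n%:R.
  move=> y _; exists (Num.Def.archi_bound (dist x0 y)) => //.
  exact: archi_boundP (dist_ge0 _ _).
have [J fJ sJ] := Hcompact _ (fun n : nat => dball x0 n%:R) (fun n => dball_open x0 n%:R) cov.
have [N HN] := @finite_nat_bound nat _ id fJ.
exists (N%:R + N%:R) => x y.
have [i Ji hi] := sJ x Logic.I; have [j Jj hj] := sJ y Logic.I.
rewrite /dball /= in hi hj.
apply: (le_trans (dist_tri x x0 y)); rewrite distC.
apply: lerD; apply/ltW.
  by apply: (lt_le_trans hi); rewrite ler_nat; apply: HN.
by apply: (lt_le_trans hj); rewrite ler_nat; apply: HN.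
Qed.

Lemma cluster (K : set X) (ys : nat -> X) : dclosed K -> (forall m, K (ys m)) ->
  exists2 y, K y & forall r, 0 < r -> forall N, exists2 m, (N <= m)%N & dist y (ys m) < r.
Proof.
move=> cK Kys; apply: contrapT => hn.
have H : forall y, exists (p : R * nat), 0 < p.1 /\ forall m, (p.2 <= m)%N -> ~ dist y (ys m) < p.1.
  move=> y; have [Ky|nKy] := pselect (K y).
    have : ~ (forall r, 0 < r -> forall N, exists2 m, (N <= m)%N & dist y (ys m) < r).
      by move=> h; apply: hn; exists y.
    move=> /existsNP[r /not_implyP[r0 /existsNP[N hN]]].
    exists (r, N); split => // m Nm hm; apply: hN; by exists m.
  have [r r0 hr] := cK y nKy; exists (r, 0%N); split => // m _ hm.
  by apply: (hr (ys m) hm); apply: Kys.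
pose p y := projT1 (cid (H y)).
have hp y : 0 < (p y).1 /\ forall m, ((p y).2 <= m)%N -> ~ dist y (ys m) < (p y).1.
  exact: (projT2 (cid (H y))).
have cov : setT `<=` \bigcup_(y in [set: X]) dball y (p y).1.
  by move=> y _; exists y => //; rewrite /dball /= distxx; case: (hp y).
have [J fJ sJ] := Hcompact _ (fun y => dball y (p y).1) (fun y => dball_open y (p y).1) cov.
have [N HN] := @finite_nat_bound X _ (fun y => (p y).2) fJ.
have [y Jy hy] := sJ (ys N) Logic.I.
by case: (hp y) => _ h; apply: (h N (HN y Jy)).
Qed.

End Metric.
Arguments dist_ge0 {R X dist}. Arguments distxx {R X dist}. Arguments distC {R X dist}.
Arguments dist_tri {R X dist}. Arguments dball_open {R X dist}.
Arguments dist_bounded {R X dist}. Arguments cluster {R X dist}.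
Lemma card_le_of_inj {T : Type} {U : pointedType} (A : set T) (B : set U) (g : T -> U) :
  (forall x, A x -> B (g x)) -> (forall x y, A x -> A y -> g x = g y -> x = y) ->
  (A #<= B)%card.
Proof.
move=> hf hi; apply/pcard_leP; apply/injfunPex; exists g.
  by move=> x Ax; apply: hf.
by move=> x y; rewrite !inE => Ax Ay; apply: hi.
Qed.

Section Flow.
Context {R : realType} {X : pointedType} (dist : X -> X -> R).
Hypothesis Hmetric : is_metric dist.
Hypothesis Hcompact : dcompact dist.
Variable f : R -> X -> X.
Hypothesis Hflow : is_continuous_flow dist f.

Lemma contf r x {e : R} : 0 < e -> exists2 del, 0 < del &
  forall y, dist x y < del -> dist (f r x) (f r y) < e.
Proof.
case: Hflow => _ _ h e0; have [del d0 hd] := h r x e e0.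
by exists del => // y hy; apply: hd => //; rewrite subrr normr0.
Qed.

Lemma preimage_open r O : dopen dist O -> dopen dist (f r @^-1` O).
Proof.
move=> hO x /= Ox; have [e e0 he] := hO _ Ox.
have [del d0 hd] := contf r x e0; exists del => // y /= hy.
by apply: he; apply: hd.
Qed.

Lemma local_cont z s0 {c : R} : 0 < c -> exists2 del, 0 < del &
  forall s y, `|s - s0| < del -> dist z y < del -> dist (f s z) (f s y) < c.
Proof.
move=> c0; case: Hflow => _ _ h.
have [del d0 hd] := h s0 z (c / 2) (divr_gt0 c0 (ltr0Sn _ 1)).
exists del => // s y hs hy.
apply: (le_lt_trans (dist_tri Hmetric _ (f s0 z) _)).
rewrite (splitr c); apply: ltrD; last exact: hd.
by rewrite (distC Hmetric); apply: hd => //; rewrite (distxx Hmetric).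
Qed.

Lemma unif_cont z {t c : R} : 0 <= t -> 0 < c -> exists2 del, 0 < del &
  forall y, dist z y < del -> forall s, 0 <= s <= t -> dist (f s z) (f s y) < c.
Proof.
move=> t0 c0.
pose P a := exists2 del, 0 < del &
  forall y, dist z y < del -> forall s, 0 <= s <= a -> dist (f s z) (f s y) < c.
pose S := [set a | 0 <= a <= t /\ P a].
have S0 : S 0.
  split; first by rewrite lexx t0.
  have [del d0 hd] := local_cont z 0 c0; exists del => // y hy s.
  move=> /andP[s0 s0']; have -> : s = 0 by apply/le_anti; rewrite s0 s0'.
  by apply: hd; rewrite // subrr normr0.
have hsS : has_sup S.
  by split; [exists 0 | exists t => a [/andP[_ ->]]].
set c1 := sup S.
have c1ge : 0 <= c1 by apply: ub_le_sup => //; case: hsS.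
have [del0 d0 hd0] := local_cont z c1 c0.
have [a [/andP[a0 at_] [dela da hda]] ha] := sup_adherent d0 hsS.
pose b := Num.min t (c1 + del0 / 2).
have Pb : P b.
  exists (Num.min dela del0); first by rewrite lt_min da d0.
  move=> y; rewrite lt_min => /andP[y1 y2] s /andP[s0 sb].
  have [sa|as_] := leP s a; first by apply: hda => //; rewrite s0 sa.
  apply: hd0 => //.
  have sc : s <= c1 + del0 / 2 by apply: (le_trans sb); rewrite ge_min lexx orbT.
  rewrite ltr_norml; apply/andP; split; rewrite -/c1 in ha; lra.
have [tle|tgt] := leP t (c1 + del0 / 2).
  have -> : t = b by rewrite /b; apply/esym/min_idPl.
  exact: Pb.
have bS : S b.
  split => //; rewrite /b ge_min lexx /= andbT.
  by rewrite le_min t0 /= addr_ge0 // divr_ge0 // ltW.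
have hb : b <= c1 by rewrite /c1; apply: ub_le_sup => //; case: hsS.
have : b = c1 + del0 / 2 by rewrite /b; apply/min_idPr/ltW.
lra.
Qed.

Lemma bowen_le t x y g : 0 <= t -> bowen_dist dist f t x y <= g ->
  forall s, 0 <= s <= t -> dist (f s x) (f s y) <= g.
Proof.
move=> t0 hb s hs; apply: le_trans hb.
have [B hB] := dist_bounded Hmetric Hcompact x.
apply: ub_le_sup; last by exists s => //; rewrite /= in_itv /=.
by exists B => _ [u _ <-].
Qed.

Lemma bowen_ge t x y g : 0 <= t ->
  (forall s, 0 <= s <= t -> dist (f s x) (f s y) <= g) -> bowen_dist dist f t x y <= g.
Proof.
move=> t0 h; apply: ge_sup.
  exists (dist (f 0 x) (f 0 y)), 0 => //.
  by rewrite /= in_itv /= lexx t0.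
by move=> _ [u hu <-]; apply: h; move: hu; rewrite /= in_itv /=.
Qed.

Lemma bowen_xx t x : 0 <= t -> bowen_dist dist f t x x <= 0.
Proof. by move=> t0; apply: bowen_ge => // s _; rewrite (distxx Hmetric). Qed.

Lemma separated_finite t g E : 0 <= t -> 0 < g -> Defs.separated dist f t g E -> finite_set E.
Proof.
move=> t0 g0 sE.
have H : forall z, exists del : R, 0 < del /\ forall y, dist z y < del ->
    forall s, 0 <= s <= t -> dist (f s z) (f s y) < g / 2.
  move=> z; have [del d0 hd] := unif_cont z t0 (divr_gt0 g0 (ltr0Sn _ 1)).
  by exists del.
pose del z := projT1 (cid (H z)).
have hdel z := projT2 (cid (H z)).
have cov : setT `<=` \bigcup_(z in [set: X]) dball dist z (del z).
  by move=> y _; exists y => //; rewrite /dball /= distxx; case: (hdel y).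
have [J fJ sJ] := Hcompact _ (fun z => dball dist z (del z))
   (fun z => dball_open Hmetric z (del z)) cov.
have H2 : forall x, exists z, E x -> J z /\ dist z x < del z.
  move=> x; have [z Jz hz] := sJ x Logic.I; by exists z.
pose zz x := projT1 (cid (H2 x)).
have hzz x : E x -> J (zz x) /\ dist (zz x) x < del (zz x) := projT2 (cid (H2 x)).
apply: (card_le_finite _ fJ); apply: (@card_le_of_inj _ _ _ _ zz).
  by move=> x /hzz[].
move=> x y Ex Ey exy; apply: contrapT => nxy.
have := sE x y Ex Ey nxy; apply/negP; rewrite -leNgt.
apply: bowen_ge => // s hs.
have [_ h1] := hzz x Ex; have [_ h2] := hzz y Ey; rewrite exy in h1.
apply: (le_trans (dist_tri Hmetric _ (f s (zz y)) _)).
rewrite (splitr g); apply: lerD; apply: ltW.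
  by rewrite (distC Hmetric); case: (hdel (zz y)) => _ h; apply: h.
by case: (hdel (zz y)) => _ h; apply: h.
Qed.

End Flow.
Arguments contf {R X dist f} Hflow r x {e}. Arguments preimage_open {R X dist f}.
Arguments local_cont {R X dist} Hmetric f Hflow z s0 {c}. Arguments unif_cont {R X dist} Hmetric f Hflow z {t c}.
Arguments bowen_le {R X dist}. Arguments bowen_ge {R X dist}.
Arguments bowen_xx {R X dist}. Arguments separated_finite {R X dist}.
Arguments card_le_of_inj {T U A B}.
Section Reg.
Context {R : realType} {d : measure_display} {X : measurableType d} (dist : X -> X -> R).
Hypothesis Hmetric : is_metric dist.
Hypothesis Hborel : @measurable d X = <<s [set U | dopen dist U] >>.
Variable mu : probability X R.

Lemma open_meas {O} : dopen dist O -> measurable O.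
Proof. by move=> hO; rewrite Hborel; apply: sub_gen_smallest. Qed.

Lemma closed_meas {C} : dclosed dist C -> measurable C.
Proof. by move=> hC; rewrite -(setCK C); apply: measurableC; apply: open_meas. Qed.

Lemma dec_small (G : nat -> set X) (N : set X) : (forall n, measurable (G n)) ->
  (forall n m, (n <= m)%N -> G m `<=` G n) -> measurable N -> mu N = 0%E ->
  \bigcap_n G n `<=` N -> forall del : R, 0 < del -> exists n, (mu (G n) < del%:E)%E.
Proof.
move=> mG dG mN N0 sN del d0.
have ni : nonincreasing_seq G by move=> n m nm; rewrite subsetEset; apply: dG.
have mI : measurable (\bigcap_n G n) by apply: bigcapT_measurable.
have fin : (mu (G 0%N) < +oo)%E.
  by apply: (le_lt_trans (probability_le1 mu (mG 0%N))); rewrite ltry.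
have h1 := nonincreasing_cvg_mu fin mG mI ni.
have ni2 : nonincreasing_seq (mu \o G).
  by move=> n m nm; apply: le_measure; rewrite ?inE //; apply: dG.
have h2 := ereal_nonincreasing_cvgn ni2.
have e : ereal_inf ((mu \o G) @` setT) = mu (\bigcap_n G n).
  by rewrite -(cvg_lim _ h2) // (cvg_lim _ h1).
have I0 : mu (\bigcap_n G n) = 0%E.
  apply/le_anti; rewrite measure_ge0 andbT -N0; apply: le_measure => //; by rewrite inE.
have : (ereal_inf ((mu \o G) @` setT) < del%:E)%E by rewrite e I0 lte_fin.
by move=> /ereal_inf_lt[_ [n _ <-] h]; exists n.
Qed.

Definition inner (B : set X) := forall del : R, 0 < del ->
  exists2 C, dclosed dist C & C `<=` B /\ (mu (B `\` C) < del%:E)%E.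

Lemma closedU C1 C2 : dclosed dist C1 -> dclosed dist C2 -> dclosed dist (C1 `|` C2).
Proof.
move=> h1 h2 x; rewrite setCU => -[x1 x2].
have [r1 r10 hr1] := h1 x x1; have [r2 r20 hr2] := h2 x x2.
exists (Num.min r1 r2); first by rewrite lt_min r10 r20.
move=> y /=; rewrite lt_min => /andP[y1 y2]; split; [exact: hr1| exact: hr2].
Qed.

Lemma closedI C1 C2 : dclosed dist C1 -> dclosed dist C2 -> dclosed dist (C1 `&` C2).
Proof.
move=> h1 h2 x; rewrite setCI => -[x1|x2].
  by have [r r0 hr] := h1 x x1; exists r => // y /hr; left.
by have [r r0 hr] := h2 x x2; exists r => // y /hr; right.
Qed.

Lemma closed_bigcap (C : nat -> set X) : (forall n, dclosed dist (C n)) ->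
  dclosed dist (\bigcap_n C n).
Proof.
move=> hC x; rewrite setC_bigcap => -[n _ xn].
by have [r r0 hr] := hC n x xn; exists r => // y /hr hy; exists n.
Qed.

Lemma inner2 A B T (op : set X -> set X -> set X) :
  (forall C1 C2, dclosed dist C1 -> dclosed dist C2 -> dclosed dist (op C1 C2)) ->
  (forall C1 C2, C1 `<=` A -> C2 `<=` B ->
     op C1 C2 `<=` T /\ T `\` op C1 C2 `<=` (A `\` C1) `|` (B `\` C2)) ->
  measurable A -> measurable B -> measurable T -> inner A -> inner B -> inner T.
Proof.
move=> hop hsub mA mB mT iA iB del d0.
have d2 : 0 < del / 2 by rewrite divr_gt0.
have [C1 c1 [s1 e1]] := iA _ d2; have [C2 c2 [s2 e2]] := iB _ d2.
have [h3 h4] := hsub _ _ s1 s2.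
exists (op C1 C2); first exact: hop.
split => //.
have m1 := closed_meas c1; have m2 := closed_meas c2.
have mo := closed_meas (hop _ _ c1 c2).
apply: (le_lt_trans (le_measure mu _ _ h4)); rewrite ?inE.
- by apply: measurableD.
- by apply: measurableU; apply: measurableD.
apply: (le_lt_trans (measureU2 mu _ _)); try by apply: measurableD.
by rewrite (splitr del) EFinD; apply: lteD.
Qed.

Definition good B := [/\ measurable B, inner B & inner (~` B)].

Lemma inner_set0 : inner set0.
Proof.
move=> del d0; exists set0; last by split => //; rewrite setDv measure0.
by rewrite /dclosed /dopen => x _; exists 1 => // y _ [].
Qed.

Lemma inner_setT : inner setT.
Proof.
move=> del d0; exists setT; last by split => //; rewrite setDv measure0.
by rewrite /dclosed setCT /dopen => x.
Qed.

Lemma goodC B : good B -> good (~` B).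
Proof. by case=> mB i1 i2; split; [exact: measurableC | | rewrite setCK]. Qed.

Lemma goodU A B : good A -> good B -> good (A `|` B).
Proof.
case=> mA iA iA' [mB iB iB']; split.
- exact: measurableU.
- apply: (@inner2 _ _ _ setU _ _ _ _ _ iA iB) => //; first exact: closedU.
  + move=> C1 C2 s1 s2; split; first by move=> x [/s1|/s2]; [left|right].
    by move=> x [[xa|xb] /not_orP[n1 n2]]; [left|right].
  + exact: measurableU.
- rewrite setCU; apply: (@inner2 _ _ _ setI _ _ _ _ _ iA' iB') => //; first exact: closedI.
  + move=> C1 C2 s1 s2; split; first by move=> x [/s1 ? /s2 ?].
    move=> x [[xa xb] /not_andP[n1|n2]]; [left|right] => //.
  + exact: measurableC.
  + exact: measurableC.
  + by apply: measurableI; apply: measurableC.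
Qed.

Lemma good_open O : dopen dist O -> good O.
Proof.
move=> hO; split; first exact: open_meas.
- pose F n : set X := [set x | forall z, ~ O z -> (n.+1%:R)^-1 <= dist x z].
  have cF n : dclosed dist (F n).
    move=> x /= /existsNP[z /not_implyP[nOz /negP]]; rewrite -ltNge => hz.
    exists ((n.+1%:R)^-1 - dist x z); first by rewrite subr_gt0.
    move=> y /= hy hFy; have := hFy z nOz; apply/negP; rewrite -ltNge.
    apply: (le_lt_trans (dist_tri Hmetric y x z)).
    by rewrite (distC Hmetric y x) -ltrBrDr.
  have FO n : F n `<=` O.
    move=> x Fx; apply: contrapT => nO; have := Fx x nO; apply/negP.
    by rewrite (distxx Hmetric) -ltNge invr_gt0 ltr0Sn.
  have Fi n m : (n <= m)%N -> F n `<=` F m.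
    move=> nm x Fx z nOz; apply: le_trans (Fx z nOz).
    by rewrite lef_pV2 ?posrE ?ltr0Sn // ler_nat.
  have h1 n : measurable (O `\` F n).
    by apply: measurableD; [exact: open_meas | exact: closed_meas].
  have h2 n m : (n <= m)%N -> O `\` F m `<=` O `\` F n.
    by move=> nm x [Ox nF]; split => // /(Fi _ _ nm).
  have h3 : \bigcap_n (O `\` F n) `<=` set0.
    move=> x Ix; have Ox : O x by case: (Ix 0%N Logic.I).
    have [r r0 hr] := hO x Ox.
    pose n := Num.Def.archi_bound r^-1.
    have hn : r^-1 < n%:R by apply: archi_boundP; rewrite invr_ge0 ltW.
    case: (Ix n Logic.I) => _; apply => z nOz.
    have : r <= dist x z by rewrite leNgt; apply/negP => /hr.
    apply: le_trans; rewrite -[leRHS]invrK lef_pV2 ?posrE ?invr_gt0 ?ltr0Sn //.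
    by apply: ltW; apply: (lt_le_trans hn); rewrite ler_nat.
  move=> del d0.
  have [n hn] := @dec_small (fun n => O `\` F n) set0 h1 h2 measurable0 (measure0 mu) h3 del d0.
  by exists (F n); [apply: cF | split; [apply: FO|]].
- move=> del d0; exists (~` O); first by rewrite /dclosed setCK.
  by split => //; rewrite setDv measure0.
Qed.


Lemma good_bigcup (F : nat -> set X) : (forall n, good (F n)) -> good (\bigcup_n F n).
Proof.
move=> gF.
have mF n : measurable (F n) by case: (gF n).
pose P n := \bigcup_(i in [set k | (k < n)%N]) F i.
have PS n : P n.+1 = P n `|` F n.
  apply/seteqP; split.
    move=> x [i /= hi Fx]; rewrite ltnS leq_eqVlt in hi.
    by case/orP: hi => [/eqP <-|hi]; [right|left; exists i].
  by move=> x [[i hi Fx]|Fx]; [exists i => //=; apply: ltnW|exists n => /=].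
have P0 : P 0%N = set0 by apply/seteqP; split => x // [].
have gP n : good (P n).
  elim: n => [|n IH]; first by rewrite P0; split;
    [exact: measurable0 | exact: inner_set0 | rewrite setC0; exact: inner_setT].
  by rewrite PS; apply: goodU.
have mP n : measurable (P n) by case: (gP n).
have mU : measurable (\bigcup_n F n) by apply: bigcupT_measurable.
split => //.
- move=> del d0; have d2 : 0 < del / 2 by rewrite divr_gt0.
  have h1 n : measurable (\bigcup_n F n `\` P n) by apply: measurableD.
  have h2 n m : (n <= m)%N -> (\bigcup_n F n `\` P m) `<=` (\bigcup_n F n `\` P n).
    move=> nm x [Ux nP]; split => // -[i /= hi Fx]; apply: nP; exists i => //=.
    exact: leq_trans hi nm.
  have h3 : \bigcap_n (\bigcup_n F n `\` P n) `<=` set0.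
    move=> x Ix; have [i _ Fx] : (\bigcup_n F n) x by case: (Ix 0%N Logic.I).
    by case: (Ix i.+1 Logic.I) => _; apply; exists i => /=.
  have [n hn] := @dec_small _ set0 h1 h2 measurable0 (measure0 mu) h3 _ d2.
  case: (gP n) => _ iP _; have [C cC [sC eC]] := iP _ d2.
  exists C => //; split; first by move=> x /sC [i hi Fx]; exists i.
  apply: (@le_lt_trans _ _ (mu ((\bigcup_n F n `\` P n) `|` (P n `\` C)))).
    apply: le_measure; rewrite ?inE.
    - by apply: measurableD => //; exact: closed_meas.
    - by apply: measurableU => //; apply: measurableD => //; exact: closed_meas.
    by move=> x [Ux nC]; have [Px|nPx] := pselect (P n x); [right|left].
  apply: (le_lt_trans (measureU2 mu _ _)) => //.
    by apply: measurableD => //; exact: closed_meas.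
  by rewrite (splitr del) EFinD; apply: lteD.
- move=> del d0; have d2 : 0 < del / 2 by rewrite divr_gt0.
  pose e n : R := del / 2 / (2 ^ n.+1)%:R.
  have e0 n : 0 < e n by rewrite divr_gt0 // ltr0n expn_gt0.
  have H n : exists C, dclosed dist C /\ C `<=` ~` F n /\ (mu (~` F n `\` C) < (e n)%:E)%E.
    by case: (gF n) => _ _ i; have [C cC [sC eC]] := i _ (e0 n); exists C.
  pose C n := projT1 (cid (H n)).
  have hC n : dclosed dist (C n) /\ C n `<=` ~` F n /\ (mu (~` F n `\` C n) < (e n)%:E)%E.
    exact: (projT2 (cid (H n))).
  exists (\bigcap_n C n).
    by apply: closed_bigcap => n; case: (hC n).
  split.
    move=> x Cx [i _ Fx]; have := Cx i Logic.I; case: (hC i) => _ [sC _].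
    by move=> /sC.
  have mC n : measurable (C n) by case: (hC n) => cC _; apply: closed_meas.
  have mD n : measurable (~` F n `\` C n) by apply: measurableD => //; apply: measurableC.
  apply: (@le_lt_trans _ _ (\sum_(n <oo) mu (~` F n `\` C n))%E).
    apply: measure_sigma_subadditive => //.
      apply: measurableD; first exact: measurableC.
      by apply: bigcapT_measurable.
    move=> x [nU nC]; have [i nCi] : exists i, ~ C i x.
      by apply: contrapT => h; apply: nC => i _; apply: contrapT => h'; apply: h; exists i.
    by exists i => //; split => // Fx; apply: nU; exists i.
  apply: (@le_lt_trans _ _ (\sum_(n <oo) (0 + (del / 2 / (2 ^ n.+1)%:R)%:E))%E).
    apply: lee_nneseries => [n _ _|n _]; first exact: measure_ge0.
    by rewrite add0e; apply: ltW; case: (hC n) => _ [].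
  apply: (le_lt_trans (epsilon_trick _ _ _)); try (by move=> ?; rewrite lexx); try (by apply: ltW).
  rewrite eseries0 // add0e lte_fin; lra.
Qed.

Lemma good_meas B : measurable B -> good B.
Proof.
rewrite Hborel => mB; apply: (smallest_sub _ _ mB).
- split.
  + by split; [exact: measurable0 | exact: inner_set0 | rewrite setC0; exact: inner_setT].
  + by move=> A gA; rewrite setTD; apply: goodC.
  + exact: good_bigcup.
- by move=> O hO; apply: good_open.
Qed.

Lemma inner_meas B : measurable B -> inner B.
Proof. by case/good_meas. Qed.

End Reg.
Lemma inv_succ_lt (R : realType) (del : R) (N : nat) : 0 < del ->
  (Num.Def.archi_bound del^-1 <= N)%N -> (N.+1%:R)^-1 < del.
Proof.
move=> d0 hN.
have hn : del^-1 < (Num.Def.archi_bound del^-1)%:R.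
  by apply: archi_boundP; rewrite invr_ge0 ltW.
rewrite -[ltRHS]invrK ltf_pV2 ?posrE ?invr_gt0 ?ltr0Sn //.
apply: (lt_le_trans hn); rewrite ler_nat; exact: leq_trans hN _.
Qed.

Section Key.
Context {R : realType} {X : pointedType} (dist : X -> X -> R).
Hypothesis Hmetric : is_metric dist.
Hypothesis Hcompact : dcompact dist.
Variable f : R -> X -> X.
Hypothesis Hflow : is_continuous_flow dist f.
Variable eps : R.

Lemma lim_witness (K' : set X) (x : X) (xs ys : nat -> X) (S : nat -> set R) :
  dclosed dist K' -> (forall m, K' (ys m)) ->
  (forall m, dist x (xs m) < (m.+1%:R)^-1) ->
  (forall m r, S m r -> dist (f r (xs m)) (f r (ys m)) <= eps) ->
  (forall m m' r, (m <= m')%N -> S m r -> S m' r) ->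
  exists2 y, K' y & forall r m, S m r -> dist (f r x) (f r y) <= eps.
Proof.
move=> cK Kys hxs hS mS.
have [y Ky hy] := cluster Hmetric Hcompact _ _ cK Kys.
exists y => // r m0 Sr.
apply/ler_addgt0Pr => eta eta0.
have e2 : 0 < eta / 2 by rewrite divr_gt0.
have [del1 d1 h1] := contf Hflow r x e2.
have [del2 d2 h2] := contf Hflow r y e2.
pose N := maxn m0 (Num.Def.archi_bound del1^-1).
have [m Nm hm] := hy _ d2 N.
have hxm : dist x (xs m) < del1.
  apply: (lt_trans (hxs m)); apply: inv_succ_lt => //.
  by apply: leq_trans Nm; rewrite leq_maxr.
have Sm : S m r by apply: (mS m0) Sr; apply: leq_trans Nm; rewrite leq_maxl.
apply: (le_trans (dist_tri Hmetric _ (f r (xs m)) _)).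
apply: (le_trans (lerD (lexx _) (dist_tri Hmetric _ (f r (ys m)) _))).
have a1 := h1 _ hxm; have a2 := h2 _ hm; have a3 := hS m r Sm.
rewrite (distC Hmetric (f r (ys m))) in a2 *.
lra.
Qed.

End Key.

Theorem proposition3p9 (R : realType) (d : measure_display) (X : measurableType d)
  (dist : X -> X -> R)
  (Hmetric : is_metric dist)
  (Hborel : @measurable d X = <<s [set U | dopen dist U] >>)
  (Hcompact : dcompact dist)
  (f : R -> X -> X) (Hflow : is_continuous_flow dist f)
  (mu : probability X R)
  (Hinv : forall (t : R) (A : set X), measurable A -> mu (f t @^-1` A) = mu A)
  (eps : R) (Heps : 0 < eps)
  (Hae : mu.-negligible (NE dist f eps))
  (gamma : R) (Hgamma0 : 0 < gamma) (Hgamma1 : gamma <= eps / 2)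
  (E : R -> set X) (A : R -> set (set X))
  (HE : forall t : R, 0 < t -> max_separated dist f t gamma (E t))
  (HA : forall t : R, 0 < t -> adapted dist f t gamma (E t) (A t))
  (HAmeas : forall t : R, 0 < t -> forall w, A t w -> measurable w)
  (Q : set X) (HQ : measurable Q) (HQinv : forall t : R, f t @^-1` Q = Q) :
  forall alpha : R, 0 < alpha ->
    exists2 t0 : R, 0 < t0 &
      forall t : R, t0 <= t ->
        exists2 U : set (set X), U `<=` A t &
          (mu (((\bigcup_(w in U) w) `\` Q) `|` (Q `\` \bigcup_(w in U) w)) < alpha%:E)%E.
Proof.
move=> alpha a0.
pose del := alpha / 3.
have d0 : 0 < del by rewrite divr_gt0.
case: (Hflow) => f0 fadd _.
have fmeas : forall r B, measurable B -> measurable (f r @^-1` B).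
  move=> r B mB.
  have mf : measurable_fun setT (f r).
    apply: (@measurability _ _ _ _ setT (f r) _ Hborel) => _ [Ob hO <-]; rewrite setTI.
    by apply: (open_meas dist Hborel); apply: (preimage_open Hflow).
  by have := mf measurableT B mB; rewrite setTI.
have [K cK [sK eK]] := inner_meas dist Hmetric Hborel mu Q HQ del d0.
have [K' cK' [sK' eK']] := inner_meas dist Hmetric Hborel mu (~` Q) (measurableC HQ) del d0.
have [N [mN N0 sN]] := Hae.
pose H (n : nat) := [set x | exists2 y, K' y &
  forall r, -(n%:R) <= r <= n%:R -> dist (f r x) (f r y) <= eps].
have cH n : dclosed dist (H n).
  move=> x nHx; apply: contrapT => nex.
  have hz : forall m : nat, exists z, dist x z < (m.+1%:R)^-1 /\ H n z.
    move=> m; apply: contrapT => hm; apply: nex; exists (m.+1%:R)^-1.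
      by rewrite invr_gt0 ltr0Sn.
    by move=> z hz Hz; apply: hm; exists z.
  pose xs m := projT1 (cid (hz m)).
  have hxs m : dist x (xs m) < (m.+1%:R)^-1 /\ H n (xs m) := projT2 (cid (hz m)).
  have hy m : exists y, K' y /\ forall r, -(n%:R) <= r <= n%:R ->
      dist (f r (xs m)) (f r y) <= eps.
    by case: (hxs m) => _ [y Ky hy]; exists y.
  pose ys m := projT1 (cid (hy m)).
  have hys m : K' (ys m) /\ forall r, -(n%:R) <= r <= n%:R ->
      dist (f r (xs m)) (f r (ys m)) <= eps := projT2 (cid (hy m)).
  have [y Ky hy'] := @lim_witness _ _ dist Hmetric Hcompact f Hflow eps K' x xs ys
    (fun _ => [set r | -(n%:R) <= r <= n%:R]) cK' (fun m => proj1 (hys m))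
    (fun m => proj1 (hxs m)) (fun m r hr => proj2 (hys m) r hr) (fun _ _ _ _ h => h).
  by apply: nHx; exists y => // r hr; exact: (hy' r 0%N hr).
have mG n : measurable (K `&` H n).
  by apply: measurableI; apply: (closed_meas dist Hborel).
have dG n m : (n <= m)%N -> K `&` H m `<=` K `&` H n.
  move=> nm x [Kx [y Ky hy]]; split => //; exists y => // r /andP[r1 r2]; apply: hy.
  have h : (n%:R <= m%:R :> R) by rewrite ler_nat.
  by apply/andP; split; lra.
have IG : \bigcap_n (K `&` H n) `<=` N.
  move=> x Ix; apply: sN.
  have Kx : K x by case: (Ix 0%N Logic.I).
  have hy m : exists y, K' y /\ forall r, -(m%:R) <= r <= m%:R ->
      dist (f r x) (f r y) <= eps.
    by case: (Ix m Logic.I) => _ [y Ky hy]; exists y.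
  pose ys m := projT1 (cid (hy m)).
  have hys m : K' (ys m) /\ forall r, -(m%:R) <= r <= m%:R ->
      dist (f r x) (f r (ys m)) <= eps := projT2 (cid (hy m)).
  have xx m : dist x x < (m.+1%:R)^-1 by rewrite (distxx Hmetric) invr_gt0 ltr0Sn.
  have mono (m m' : nat) (r : R) : (m <= m')%N -> -(m%:R) <= r <= m%:R -> -(m'%:R) <= r <= m'%:R.
    move=> mm /andP[r1 r2]; have h : (m%:R <= m'%:R :> R) by rewrite ler_nat.
    by apply/andP; split; lra.
  have [y Ky hy'] := @lim_witness _ _ dist Hmetric Hcompact f Hflow eps K' x (fun _ => x) ys
    (fun m => [set r | -(m%:R) <= r <= m%:R]) cK' (fun m => proj1 (hys m))
    xx (fun m r hr => proj2 (hys m) r hr) mono.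
  move=> hsub.
  have Gy : Gamma_set dist f eps x y.
    move=> r; apply: (hy' r (Num.Def.archi_bound `|r|)).
    by rewrite /= -ler_norml; apply/ltW/archi_boundP.
  have [s _ es] := hsub y Gy.
  have Qx : Q x by apply: sK.
  have e := congr1 (fun S => S x) (HQinv s).
  have Qfs : Q (f s x) by change ((f s @^-1` Q) x); rewrite e.
  by apply: (sK' y Ky); rewrite -es.
have [n0 hn0] := dec_small mu (fun n => K `&` H n) N mG dG mN N0 IG del d0.
exists (2 * n0%:R + 1).
  by apply: ltr_wpDl => //; rewrite mulr_ge0.
move=> t ht.
have t_pos : 0 < t by apply: lt_le_trans ht; apply: ltr_wpDl => //; rewrite mulr_ge0.
have [sepE _] := HE t t_pos.
have finE : finite_set (E t) :=
  separated_finite Hmetric Hcompact f Hflow t gamma (E t) (ltW t_pos) Hgamma0 sepE.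
have [[Pne Pdis Pcov] Pad] := HA t t_pos.
have hc w : exists c, A t w -> E t c /\ (bowen_ball dist f t c (gamma / 2) `<=` w /\
    w `<=` bowen_cball dist f t c gamma).
  by case: (pselect (A t w)) => [/Pad[c Ec h]|nA]; [exists c|exists point].
pose cen w := projT1 (cid (hc w)).
have hcen w : A t w -> E t (cen w) /\ (bowen_ball dist f t (cen w) (gamma / 2) `<=` w /\
    w `<=` bowen_cball dist f t (cen w) gamma) := projT2 (cid (hc w)).
have cin w : A t w -> w (cen w).
  move=> Aw; have [_ [b _]] := hcen w Aw; apply: b; rewrite /bowen_ball /=.
  apply: (le_lt_trans (bowen_xx Hmetric f t _ (ltW t_pos))).
  by rewrite divr_gt0.
have finA : finite_set (A t).
  apply: (card_le_finite _ finE); apply: (card_le_of_inj cen).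
    by move=> w /hcen[].
  move=> w1 w2 A1 A2 e; apply: Pdis => //; exists (cen w1); split.
    exact: cin.
  by rewrite e; exact: cin.
pose s := t / 2.
pose U := [set w | A t w /\ exists2 x, (K `\` H n0) x & w (f (-s) x)].
have sU : U `<=` A t by move=> w [].
exists U => //.
set W := \bigcup_(w in U) w.
have mW : measurable W.
  apply: fin_bigcup_measurable; first exact: (sub_finite_set sU finA).
  by move=> w hw; apply: (HAmeas t t_pos w (sU w hw)).
pose V := f (-s) @^-1` W.
have mV : measurable V by apply: fmeas.
have eqQ z : Q (f (-s) z) = Q z.
  by have := congr1 (fun S => S z) (HQinv (-s)).
have pre : f (-s) @^-1` ((W `\` Q) `|` (Q `\` W)) = (V `\` Q) `|` (Q `\` V).
  apply/seteqP; split => z /=.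
    by case=> -[h1 h2]; [left|right]; rewrite -eqQ.
  by case=> -[h1 h2]; [left|right]; rewrite eqQ.
have mWQ : measurable ((W `\` Q) `|` (Q `\` W)).
  by apply: measurableU; apply: measurableD.
rewrite -(Hinv (-s) _ mWQ) pre.
apply: (le_lt_trans (measureU2 mu (measurableD mV HQ) (measurableD HQ mV))).
have mK : measurable K by apply: (closed_meas dist Hborel).
have mK' : measurable K' by apply: (closed_meas dist Hborel).
have h1 : (mu (V `\` Q) <= mu (~` Q `\` K'))%E.
  apply: le_measure; rewrite ?inE; first exact: measurableD.
    by apply: measurableD => //; apply: measurableC.
  move=> z [[w [Aw [x1 [Kx1 nHx1] wx1]] wz] nQz]; split => // K'z.
  apply: nHx1; exists z => // r /andP[r1 r2].
  pose u := r + s.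
  have hu : 0 <= u <= t by apply/andP; split; rewrite /u /s; lra.
  have [_ [_ cb]] := hcen w Aw.
  have b1 := bowen_le Hmetric Hcompact f t _ _ gamma (ltW t_pos) (cb _ wx1) u hu.
  have b2 := bowen_le Hmetric Hcompact f t _ _ gamma (ltW t_pos) (cb _ wz) u hu.
  have fl y : f u (f (-s) y) = f r y by rewrite -fadd /u addrK.
  rewrite !fl in b1 b2.
  apply: (le_trans (dist_tri Hmetric _ (f u (cen w)) _)).
  rewrite (distC Hmetric (f r x1)); lra.
have h2 : (mu (Q `\` V) <= mu ((Q `\` K) `|` (K `&` H n0)))%E.
  apply: le_measure; rewrite ?inE; first exact: measurableD.
    by apply: measurableU; [apply: measurableD | apply: mG].
  move=> z [Qz nVz]; have [Kz|nKz] := pselect (K z); last by left.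
  have [Hz|nHz] := pselect (H n0 z); first by right.
  exfalso; apply: nVz.
  have : (\bigcup_(w in A t) w) (f (-s) z) by rewrite Pcov.
  case=> w Aw wz; exists w => //; split => //; exists z => //.
have h3 := measureU2 mu (measurableD HQ mK) (mG n0).
apply: (le_lt_trans (leeD h1 (le_trans h2 h3))).
have -> : alpha = del + (del + del) by rewrite /del; lra.
by rewrite !EFinD; apply: lteD => //; apply: lteD.
Qed.
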